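(* Let $\mathcal H$ be a family of graphs. The following are equivalent: (i) there is a constant $c=c(\mathcal H)$ such that every (not necessarily connected) $\mathcal H$-free graph $G$ has fewer than $c$ vertices $v$ with $\mathrm{sdeg}(v)\ge 2$; (ii) there is a positive integer $n$ such that $\mathcal H\le \{K_n^*,\ nP_3,\ K_{1,n}^*\}$.
   Context: All graphs are finite, simple, undirected. For graphs $H_1,H_2$, write $H_1\prec H_2$ if $H_2$ contains an induced subgraph isomorphic to $H_1$. A graph $G$ is $\mathcal H$-free if no $H\in\mathcal H$ satisfies $H\prec G$. For families $\mathcal H_1,\mathcal H_2$, write $\mathcal H_1\le\mathcal H_2$ if for every $H_2\in\mathcal H_2$ there is $H_1\in\mathcal H_1$ with $H_1\prec H_2$. For a vertex $v$ of $G$, the sharp degree is $\mathrm{sdeg}(v)=c(G-v)-c(G)+1$, where $c(\cdot)$ is the number of connected components. $P_3$ is the path on $3$ vertices; $nG$ is the disjoint union of $n$ copies of $G$. $K_{1,n}^*$ is obtained from the star $K_{1,n}$ by attaching a new pendant vertex to each leaf; $K_n^*$ is obtained from $K_n$ by attaching a new pendant vertex to each vertex. *)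

(* Defs.v *)
From mathcomp Require Import all_boot all_order all_algebra.
Set Implicit Arguments. Unset Strict Implicit. Unset Printing Implicit Defensive.

Record graph := Graph {
  gn : nat;
  gadj : rel 'I_gn;
  gsym : symmetric gadj;
  girr : irreflexive gadj }.
Arguments gadj : clear implicits.

Definition symadj n (r : rel 'I_n) : rel 'I_n :=
  fun x y => (x != y) && (r x y || r y x).

Lemma symadj_sym n (r : rel 'I_n) : symmetric (symadj r).
Proof. by move=> x y; rewrite /symadj eq_sym orbC. Qed.

Lemma symadj_irr n (r : rel 'I_n) : irreflexive (symadj r).
Proof. by move=> x; rewrite /symadj eqxx. Qed.

Definition mkgraph n (r : rel 'I_n) : graph :=
  @Graph n (symadj r) (@symadj_sym n r) (@symadj_irr n r).

Definition induced (H1 H2 : graph) : Prop :=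
  exists f : 'I_(gn H1) -> 'I_(gn H2),
    injective f /\ forall x y, gadj H2 (f x) (f y) = gadj H1 x y.

Definition gfamily := graph -> Prop.

Definition Hfree (F : gfamily) (G : graph) : Prop :=
  forall H, F H -> ~ induced H G.

Definition fam_le (F1 F2 : gfamily) : Prop :=
  forall H2, F2 H2 -> exists2 H1, F1 H1 & induced H1 H2.

Definition restr (G : graph) (S : {set 'I_(gn G)}) : rel 'I_(gn G) :=
  fun x y => [&& x \in S, y \in S & gadj G x y].

Definition ncomp (G : graph) (S : {set 'I_(gn G)}) : nat :=
  #|[set [set y in S | connect (@restr G S) x y] | x in S]|.

Definition sdeg (G : graph) (v : 'I_(gn G)) : int :=
  ((@ncomp G (~: [set v]))%:Z - (@ncomp G [set: 'I_(gn G)])%:Z + 1)%R.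

(* K_n^* : K_n (vertices 0..n-1) with pendant n+i attached to i. *)
Definition Kstar (n : nat) : graph :=
  @mkgraph (n + n) (fun x y => ((x < n) && (y < n)) || ((x < n) && (y == x + n :> nat))).

(* n P_3 : copy k has vertices 3k, 3k+1, 3k+2 with middle vertex 3k+1. *)
Definition nP3 (n : nat) : graph :=
  @mkgraph (3 * n) (fun x y => (x %/ 3 == y %/ 3) && (x %% 3 == 1) && (y %% 3 != 1)).

(* K_{1,n}^* : centre 0, leaves 1..n, pendant n+i attached to leaf i. *)
Definition K1star (n : nat) : graph :=
  @mkgraph (n + n).+1 (fun x y =>
    ((x == 0 :> nat) && (0 < y <= n)) || ((0 < x <= n) && (y == x + n :> nat))).

Definition three_fam (n : nat) : gfamily :=
  fun H => H = Kstar n \/ H = nP3 n \/ H = K1star n.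

(* Main.v *)
Require Import Defs.
From mathcomp Require Import all_boot all_order all_algebra zify.
From Stdlib Require Import Classical.
Set Implicit Arguments. Unset Strict Implicit. Unset Printing Implicit Defensive.

Section Basics.
Variable G : graph.
Local Notation V := ('I_(gn G)).
Local Notation adj := (gadj G).

Lemma adjC x y : adj x y = adj y x. Proof. exact: gsym. Qed.
Lemma adj0 x : adj x x = false. Proof. exact: girr. Qed.

Definition Gm (v : V) : rel V := @restr G (~: [set v]).

Lemma Gm_sym v : connect_sym (Gm v).
Proof. apply: sym_connect_sym => x y; rewrite /Gm /restr adjC; by case: (x \in _); case: (y \in _). Qed.

Lemma GmE v x y : Gm v x y = [&& x != v, y != v & adj x y].
Proof. by rewrite /Gm /restr !in_setC !in_set1. Qed.

Lemma connect_adj_sym : connect_sym adj.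
Proof. apply: sym_connect_sym => x y; exact: adjC. Qed.

Definition cutb (v : V) := [exists x, exists y,
  [&& x != v, y != v, connect adj x y & ~~ connect (Gm v) x y]].

Lemma Gm_sub v x y : connect (Gm v) x y -> connect adj x y.
Proof.
apply: connect_sub => a b; rewrite GmE => /and3P[_ _ h]; exact: connect1.
Qed.

Lemma via_v v x y : x != v -> connect adj x y -> ~~ connect (Gm v) x y -> connect adj x v.
Proof.
move=> xv /connectP[p pth ->] nc; apply: contraT => nxv; case/negP: nc.
apply/connectP; exists p => //.
apply: (@sub_in_path _ [pred z | connect adj x z]); last first.
- exact: pth.
- apply/allP => z; exact: path_connect pth z.
move=> a b; rewrite !inE => ca cb ab; rewrite GmE ab andbT.
by apply/andP; split; apply/eqP => e; case/negP: nxv; rewrite -e.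
Qed.

Lemma first_hit v y : y != v -> connect adj y v ->
  exists a, [/\ adj a v, a != v & connect (Gm v) y a].
Proof.
move=> yv /connectP[p pth e]; elim: p y yv pth e => [|z p IH] y yv /=.
  by move=> _ e; rewrite e eqxx in yv.
case/andP=> yz pth e; case: (eqVneq z v) => zv.
  exists y; split => //; by rewrite -zv.
have [a [av anv c]] := IH z zv pth e.
exists a; split => //; apply: connect_trans c; apply: connect1; by rewrite GmE yv zv yz.
Qed.

Definition cls (S : {set V}) x := [set y in S | connect (@restr G S) x y].

Lemma ncompE (S : {set V}) : ncomp S = #|cls S @: S|. Proof. by []. Qed.

Lemma restr_sym (S : {set V}) : connect_sym (@restr G S).
Proof. apply: sym_connect_sym => x y; rewrite /restr adjC; by case: (x \in _); case: (y \in _). Qed.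

Lemma cls_eq (S : {set V}) x y : x \in S -> connect (@restr G S) x y -> cls S x = cls S y.
Proof.
move=> xS c; apply/setP => z; rewrite !inE.
case: (z \in S) => //=; apply/idP/idP => h.
  by apply: connect_trans h; rewrite restr_sym.
exact: connect_trans h.
Qed.

Lemma cls_neq (S : {set V}) x y : x \in S -> y \in S -> ~~ connect (@restr G S) x y -> cls S x != cls S y.
Proof.
move=> xS yS nc; apply/negP => /eqP e; case/negP: nc.
have : y \in cls S y by rewrite inE yS connect0.
by rewrite -e inE => /andP[].
Qed.

Lemma restrT : @restr G setT =2 adj.
Proof. by move=> x y; rewrite /restr !in_setT. Qed.

Lemma restrS_Gm v : @restr G (~: [set v]) = Gm v. Proof. by []. Qed.

Lemma sdeg_cut v : (2%:Z <= @sdeg G v)%R = cutb v.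
Proof.
rewrite /sdeg !ncompE.
set S := ~: [set v].
have clsT x y : connect adj x y -> cls setT x = cls setT y.
  by move=> c; apply: cls_eq; rewrite ?in_setT // (eq_connect restrT).
have ST : (cls setT @: S) \subset (cls setT @: setT) by apply: imsetS; apply: subsetT.
apply/idP/idP.
- move=> h; apply: contraT => nc.
  have key x y : x \in S -> y \in S -> connect adj x y -> connect (Gm v) x y.
    move=> xS yS c; apply: contraT => nc'; case/negP: nc; apply/existsP; exists x; apply/existsP; exists y.
    move: xS yS; rewrite !in_setC !in_set1 => -> -> /=; by rewrite c nc'.
  pose h' := fun C : {set V} => cls S (odflt v [pick z in C :&: S]).
  have E : cls S @: S = h' @: (cls setT @: S).
    rewrite -imset_comp; apply: eq_in_imset => z zS /=; rewrite /h'.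
    case: pickP => [z' | ] /=.
      rewrite !inE => /andP[] /andP[] _ c z'S.
      apply: cls_eq => //; apply: key => //; [by rewrite in_setC in_set1 | by rewrite (eq_connect restrT) in c].
    by move/(_ z); rewrite inE zS inE in_setT connect0.
  have : #|cls S @: S| <= #|cls setT @: setT|.
    rewrite E; apply: leq_trans (leq_imset_card _ _) _; exact: subset_leq_card.
  move: h; set a := #|_|; set b := #|_|; move=> h1 h2; lia.
- case/existsP=> x /existsP[y] /and4P[xv yv cxy nc].
  have xS : x \in S by rewrite in_setC in_set1.
  have yS : y \in S by rewrite in_setC in_set1.
  have cxv := via_v xv cxy nc.
  have EA : cls setT @: setT = cls setT @: S.
    apply/eqP; rewrite eqEsubset ST andbT; apply/subsetP => C /imsetP[z _ ->].
    case: (eqVneq z v) => [->|zv]; last by apply: imset_f; rewrite in_setC in_set1.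
    by rewrite -(clsT _ _ cxv); apply: imset_f.
  pose h := fun C : {set V} => cls setT (odflt v [pick z in C]).
  have E : cls setT @: S = h @: (cls S @: S).
    rewrite -imset_comp; apply: eq_in_imset => z zS /=; rewrite /h.
    case: pickP => [z' | ] /=.
      rewrite inE => /andP[_ c]; apply: clsT; exact: Gm_sub c.
    by move/(_ z); rewrite inE zS connect0.
  have lt : #|h @: (cls S @: S)| < #|cls S @: S|.
    rewrite ltn_neqAle leq_imset_card andbT; apply/negP => /imset_injP inj.
    have hx : h (cls S x) = cls setT x.
      rewrite /h; case: pickP => [z'|] /=; last by move/(_ x); rewrite inE xS connect0.
      rewrite inE => /andP[_ c]; symmetry; apply: clsT; exact: Gm_sub c.
    have hy : h (cls S y) = cls setT y.
      rewrite /h; case: pickP => [z'|] /=; last by move/(_ y); rewrite inE yS connect0.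
      rewrite inE => /andP[_ c]; symmetry; apply: clsT; exact: Gm_sub c.
    have := inj (cls S x) (cls S y) (imset_f _ xS) (imset_f _ yS).
    rewrite hx hy (clsT _ _ cxy) => /(_ erefl) /eqP; apply/negP; exact: cls_neq.
  rewrite EA E; move: lt; set a := #|_|; set b := #|_|; move=> h1; lia.
Qed.

End Basics.

Section Ramsey.
Variable N : nat.
Local Notation V := ('I_N).

Lemma set_min (W : {set V}) : W != set0 -> exists2 v0, v0 \in W & forall v, v \in W -> v0 <= v.
Proof.
case/set0Pn=> x xW.
case: (arg_minnP (fun v : V => val v) xW) => v0 v0W H; exists v0 => //.
Qed.

Lemma set_max (W : {set V}) : W != set0 -> exists2 v0, v0 \in W & forall v, v \in W -> v <= v0.
Proof.
case/set0Pn=> x xW.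
case: (arg_maxnP (fun v : V => val v) xW) => v0 v0W H; exists v0 => //.
Qed.

Definition homog (e : rel V) (W : {set V}) (b : bool) :=
  forall x y, x \in W -> y \in W -> x < y -> e x y = b.

Lemma ramsey2 (e : rel V) a b (X : {set V}) : 2 ^ (a + b) <= #|X| ->
  exists2 W : {set V}, W \subset X & (a <= #|W| /\ homog e W true) \/ (b <= #|W| /\ homog e W false).
Proof.
elim: a b X => [|a IHa] b X hX.
  by exists set0; [exact: sub0set | left; split => // x y; rewrite inE].
elim: b X hX => [|b IHb] X hX.
  by exists set0; [exact: sub0set | right; split => // x y; rewrite inE].
have X0 : X != set0.
  apply/negP => /eqP e0; move: hX; by rewrite e0 cards0 leqn0 expn_eq0.
have [x0 x0X x0m] := set_min X0.
pose X1 := [set y in X | (x0 < y) && e x0 y].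
pose X2 := [set y in X | (x0 < y) && ~~ e x0 y].
have cX : #|X| = (#|X1| + #|X2|).+1.
  rewrite (cardD1 x0) x0X add1n; congr (_.+1).
  rewrite -cardsUI.
  have -> : X1 :&: X2 = set0.
    by apply/setP => y; rewrite !inE; case: (e x0 y); rewrite ?andbF ?andbT ?andbF.
  rewrite cards0 addn0; apply: eq_card => y; rewrite !inE.
  case: (eqVneq y x0) => [->|yx] /=; first by rewrite ltnn /= !andbF.
  case yX : (y \in X) => //=.
  have : x0 < y by rewrite ltn_neqAle x0m // andbT; apply: contra_neq yx => /val_inj ->.
  by move=> ->; case: (e x0 y).
have h12 : 2 ^ (a + b.+1) <= #|X1| \/ 2 ^ (a.+1 + b) <= #|X2|.
  move: hX; rewrite cX !addnS !addSn !expnS; lia.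
case: h12 => [h1|h2].
- have [W WX [[ha hW]|[hb hW]]] := IHa _ _ h1.
  + exists (x0 |: W).
      apply/subsetP => y; rewrite !inE => /orP[/eqP->//|yW].
      by move/subsetP: WX => /(_ y yW); rewrite inE => /andP[].
    left; split.
      rewrite cardsU1; have : x0 \notin W.
        apply/negP => /(subsetP WX); by rewrite inE ltnn andbF.
      by move=> ->; rewrite add1n.
    move=> x y; rewrite !inE => /orP[/eqP->|xW] /orP[/eqP->|yW]; first by rewrite ltnn.
    * by move/subsetP: WX => /(_ y yW); rewrite inE => /and3P[].
    * move=> lt; move/subsetP: WX => /(_ x xW); rewrite inE => /andP[_ /andP[lt' _]].
      have := ltn_trans lt lt'; by rewrite ltnn.
    * exact: hW.
  + exists W; last by right.
    apply: subset_trans WX _; apply/subsetP => y; by rewrite inE => /andP[].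
- have [W WX [[ha hW]|[hb hW]]] := IHb _ h2.
  + exists W; last by left.
    apply: subset_trans WX _; apply/subsetP => y; by rewrite inE => /andP[].
  + exists (x0 |: W).
      apply/subsetP => y; rewrite !inE => /orP[/eqP->//|yW].
      by move/subsetP: WX => /(_ y yW); rewrite inE => /andP[].
    right; split.
      rewrite cardsU1; have : x0 \notin W.
        apply/negP => /(subsetP WX); by rewrite inE ltnn andbF.
      by move=> ->; rewrite add1n.
    move=> x y; rewrite !inE => /orP[/eqP->|xW] /orP[/eqP->|yW]; first by rewrite ltnn.
    * by move/subsetP: WX => /(_ y yW); rewrite inE => /and3P[_ _ /negbTE].
    * move=> lt; move/subsetP: WX => /(_ x xW); rewrite inE => /andP[_ /andP[lt' _]].
      have := ltn_trans lt lt'; by rewrite ltnn.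
    * exact: hW.
Qed.

Lemma ramsey (e : rel V) m (X : {set V}) : 4 ^ m <= #|X| ->
  exists2 W : {set V}, W \subset X & m <= #|W| /\ (homog e W true \/ homog e W false).
Proof.
move=> h; have : 2 ^ (m + m) <= #|X| by rewrite addnn -mul2n expnM.

case/(ramsey2 e) => W WX [[h1 h2]|[h1 h2]]; exists W => //; tauto.
Qed.

End Ramsey.

Section Emb.
Variable G : graph.
Local Notation V := ('I_(gn G)).
Local Notation adj := (gadj G).
Lemma adjC' x y : adj x y = adj y x. Proof. exact: gsym. Qed.
Lemma adj0' x : adj x x = false. Proof. exact: girr. Qed.

Lemma emb_Kstar n (c p : nat -> V) :
  (forall i, i < n -> adj (c i) (p i)) ->
  (forall i j, i < n -> j < n -> i != j ->
     [/\ c i != c j, adj (c i) (c j), ~~ adj (c i) (p j), p i != p j & ~~ adj (p i) (p j)]) ->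
  (forall i j, i < n -> j < n -> i != j -> c i != p j) ->
  induced (Kstar n) G.
Proof.
move=> H1 H2 H3.
have cp i : i < n -> c i != p i.
  move=> lt; apply/negP => /eqP e; have := H1 i lt; by rewrite e adj0'.
pose f (x : 'I_(n + n)) := if x < n then c x else p (x - n).
exists f; split.
- move=> [x lx] [y ly]; rewrite /f /=; simpl in lx, ly.
  case: (ltnP x n) => hx; case: (ltnP y n) => hy => e; apply: val_inj => /=.
  + case: (eqVneq x y) => // ne; have [/eqP] := H2 _ _ hx hy ne; by [].
  + exfalso; case: (eqVneq x (y - n)) => [ex|ne].
      have := cp _ hx; by rewrite e ex eqxx.
    have hy' : y - n < n by lia.
    by move: (H3 _ _ hx hy' ne); rewrite e eqxx.
  + exfalso; case: (eqVneq y (x - n)) => [ex|ne].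
      have := cp _ hy; by rewrite -e ex eqxx.
    have hx' : x - n < n by lia.
    by move: (H3 _ _ hy hx' ne); rewrite -e eqxx.
  + apply/eqP; have : x - n == y - n.
      have hx' : x - n < n by lia. have hy' : y - n < n by lia.
      apply/negPn/negP => ne; have [_ _ _ /eqP] := H2 _ _ hx' hy' ne; by [].
    move/eqP => h; apply/eqP; lia.
- move=> [x lx] [y ly]; rewrite /f /= /symadj /=; simpl in lx, ly.
  have -> : (Ordinal lx == Ordinal ly) = (x == y) by [].
  case: (ltnP x n) => hx; case: (ltnP y n) => hy /=.
  + case: (eqVneq x y) => [->|ne]; first by rewrite adj0'.
    by have [_ ->] := H2 _ _ hx hy ne.
  + rewrite (_ : (y == x + n :> nat) = (x == y - n)); last by apply/eqP/eqP; lia.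
    rewrite (_ : x != y); last by apply/eqP => e; subst; lia.
    case: (eqVneq x (y - n)) => [e|ne]; first by rewrite -e H1.
    have hy' : y - n < n by lia.
    by have [_ _ /negbTE -> _ _] := H2 _ _ hx hy' ne.
  + rewrite (_ : (x == y + n :> nat) = (y == x - n)); last by apply/eqP/eqP; lia.
    rewrite (_ : x != y) ?orbF; last by apply/eqP => e; subst; lia.
    case: (eqVneq y (x - n)) => [e|ne]; first by rewrite -e adjC' H1.
    have hx' : x - n < n by lia.
    by rewrite adjC'; have [_ _ /negbTE -> _ _] := H2 _ _ hy hx' ne.
  + rewrite andbF; case: (eqVneq (x - n) (y - n)) => [e|ne]; first by rewrite e adj0'.
    have hx' : x - n < n by lia. have hy' : y - n < n by lia.
    by have [_ _ _ _ /negbTE ->] := H2 _ _ hx' hy' ne.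
Qed.
End Emb.

Section Emb2.
Variable G : graph.
Local Notation V := ('I_(gn G)).
Local Notation adj := (gadj G).

Lemma emb_nP3 n (t : nat -> nat -> V) :
  (forall i, i < n -> [/\ adj (t i 1) (t i 0), adj (t i 1) (t i 2), ~~ adj (t i 0) (t i 2) & t i 0 != t i 2]) ->
  (forall i j s s', i < n -> j < n -> i != j -> s < 3 -> s' < 3 -> t i s != t j s' /\ ~~ adj (t i s) (t j s')) ->
  induced (nP3 n) G.
Proof.
move=> HP HX.
have Hin i a b : i < n -> a < 3 -> b < 3 -> (t i a == t i b) = (a == b).
  move=> hi; have [h10 h12 h02 n02] := HP i hi.
  have n10 : t i 1 != t i 0 by apply: contraTneq h10 => ->; rewrite adj0'.
  have n12 : t i 1 != t i 2 by apply: contraTneq h12 => ->; rewrite adj0'.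
  case: a => [|[|[|a]]] //; case: b => [|[|[|b]]] //= _ _;
    rewrite ?eqxx // ?(negbTE n10) ?(negbTE n12) ?(negbTE n02) //
      ?(eq_sym (t i 0)) ?(negbTE n10) ?(eq_sym (t i 2)) ?(negbTE n12) ?(negbTE n02) //.
pose f (x : 'I_(3 * n)) := t (x %/ 3) (x %% 3).
exists f; split.
- move=> [x lx] [y ly]; rewrite /f /=; simpl in lx, ly => e; apply: val_inj => /=.
  have dx := divn_eq x 3; have dy := divn_eq y 3.
  have ha : x %% 3 < 3 by rewrite ltn_pmod. have hb : y %% 3 < 3 by rewrite ltn_pmod.
  have hq : x %/ 3 < n by lia. have hq' : y %/ 3 < n by lia.
  move: (x %/ 3) (x %% 3) (y %/ 3) (y %% 3) dx dy ha hb hq hq' e => q a q' b -> -> ha hb hq hq' e.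
  case: (eqVneq q q') => [eq|ne]; last by have [] := HX _ _ _ _ hq hq' ne ha hb; rewrite e eqxx.
  subst q'; move/eqP: e; rewrite Hin // => /eqP ->; done.
- move=> [x lx] [y ly]; rewrite /f /= /symadj /=; simpl in lx, ly.
  have -> : (Ordinal lx == Ordinal ly) = (x == y) by [].
  have dx := divn_eq x 3; have dy := divn_eq y 3.
  have ha : x %% 3 < 3 by rewrite ltn_pmod. have hb : y %% 3 < 3 by rewrite ltn_pmod.
  have hq : x %/ 3 < n by lia. have hq' : y %/ 3 < n by lia.
  move: (x %/ 3) (x %% 3) (y %/ 3) (y %% 3) dx dy ha hb hq hq' => q a q' b -> -> ha hb hq hq'.
  case: (eqVneq q q') => [eq|ne]; last first.
    have [_ /negbTE ->] := HX _ _ _ _ hq hq' ne ha hb.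
    by rewrite /= andbF.
  subst q'; rewrite ?eqxx eqn_add2l /=.
  have [h10 h12 h02 n02] := HP q hq.
  case: a ha => [|[|[|a]]] // _; case: b hb => [|[|[|b]]] // _ /=;
    rewrite ?adj0' // ?(adjC' (t q 0)) ?(adjC' (t q 2) (t q 1)) ?h10 ?h12 ?(negbTE h02) //.
  all: by rewrite adjC' (negbTE h02).
Qed.

Lemma emb_K1star n (z : V) (c p : nat -> V) :
  (forall i, i < n -> [/\ adj z (c i), adj (c i) (p i), ~~ adj z (p i) & z != p i]) ->
  (forall i j, i < n -> j < n -> i != j ->
     [/\ c i != c j, ~~ adj (c i) (c j), ~~ adj (c i) (p j), p i != p j & ~~ adj (p i) (p j)]) ->
  (forall i j, i < n -> j < n -> i != j -> c i != p j) ->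
  induced (K1star n) G.
Proof.
move=> K1 K2 K3.
have cp i : i < n -> c i != p i.
  move=> lt; have [_ h _ _] := K1 i lt; by apply: contraTneq h => ->; rewrite adj0'.
have zc i : i < n -> z != c i.
  move=> lt; have [h _ _ _] := K1 i lt; by apply: contraTneq h => ->; rewrite adj0'.
pose f (x : 'I_(n + n).+1) := if x == 0 :> nat then z else if x <= n then c x.-1 else p (x - n).-1.
exists f; split.
- move=> [x lx] [y ly]; rewrite /f /=; simpl in lx, ly => e; apply: val_inj => /=.
  case: (eqVneq x 0) e => [->|x0]; case: (eqVneq y 0) => [->|y0] //= e.
  + case: (leqP y n) e => hy e.
      have hy' : y.-1 < n by lia. by move: (zc _ hy'); rewrite e eqxx.
    have hy' : (y - n).-1 < n by lia. by have [_ _ _] := K1 _ hy'; rewrite e eqxx.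
  + case: (leqP x n) e => hx e.
      have hx' : x.-1 < n by lia. by move: (zc _ hx'); rewrite -e eqxx.
    have hx' : (x - n).-1 < n by lia. by have [_ _ _] := K1 _ hx'; rewrite -e eqxx.
  + case: (leqP x n) e => hx; case: (leqP y n) => hy e.
    * case: (eqVneq x.-1 y.-1) => [|ne]; first by lia.
      have hx' : x.-1 < n by lia. have hy' : y.-1 < n by lia.
      by have [] := K2 _ _ hx' hy' ne; rewrite e eqxx.
    * have hx' : x.-1 < n by lia. have hy' : (y - n).-1 < n by lia.
      case: (eqVneq x.-1 (y - n).-1) => [ee|ne].
        by move: (cp _ hx'); rewrite {2}ee e eqxx.
      by move: (K3 _ _ hx' hy' ne); rewrite e eqxx.
    * have hy' : y.-1 < n by lia. have hx' : (x - n).-1 < n by lia.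
      case: (eqVneq y.-1 (x - n).-1) => [ee|ne].
        by move: (cp _ hy'); rewrite {2}ee e eqxx.
      by move: (K3 _ _ hy' hx' ne); rewrite e eqxx.
    * case: (eqVneq (x - n).-1 (y - n).-1) => [|ne]; first by lia.
      have hx' : (x - n).-1 < n by lia. have hy' : (y - n).-1 < n by lia.
      by have [_ _ _] := K2 _ _ hx' hy' ne; rewrite e eqxx.
- move=> [x lx] [y ly]; rewrite /f /= /symadj /=; simpl in lx, ly.
  have -> : (Ordinal lx == Ordinal ly) = (x == y) by [].
  case: (eqVneq x 0) => [->|x0]; case: (eqVneq y 0) => [->|y0] /=.
  + by rewrite adj0'.
  + case: (leqP y n) => hy.
      have hy' : y.-1 < n by lia. have [-> _ _ _] := K1 _ hy'.
      have h3 : 0 < y by lia. by rewrite h3.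
    have hy' : (y - n).-1 < n by lia. have [_ _ /negbTE -> _] := K1 _ hy'.
    by rewrite !andbF.
  + case: (leqP x n) => hx.
      have hx' : x.-1 < n by lia. have [h _ _ _] := K1 _ hx'.
      have h3 : 0 < x by lia. by rewrite adjC' h h3 /= orbT x0.
    have hx' : (x - n).-1 < n by lia. have [_ _ /negbTE h _] := K1 _ hx'.
    by rewrite adjC' h !andbF.
  + case: (leqP x n) => hx; case: (leqP y n) => hy.
    * case: (eqVneq x y) => [->|ne]; first by rewrite adj0'.
      have hx' : x.-1 < n by lia. have hy' : y.-1 < n by lia.
      have ne' : x.-1 != y.-1 by apply/eqP; lia.
      have [_ /negbTE -> _ _ _] := K2 _ _ hx' hy' ne'.
      have h1 : (y == x + n) = false by apply/negbTE/eqP; lia.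
      have h2 : (x == y + n) = false by apply/negbTE/eqP; lia.
      by rewrite h1 h2 !andbF.
    * have hx' : x.-1 < n by lia. have hy' : (y - n).-1 < n by lia.
      have h1 : (x == y + n) = false by apply/negbTE/eqP; lia.
      have h2 : (x != y) by apply/eqP; lia.
      have h3 : 0 < x by lia.
      rewrite h1 h2 h3 !andbF !orbF /=.
      case: (eqVneq x.-1 (y - n).-1) => [e|ne].
        have h4 : y == x + n by apply/eqP; lia.
        by have [_ h _ _] := K1 _ hx'; rewrite -e h h4.
      have h4 : (y == x + n) = false by apply/negbTE/eqP; lia.
      rewrite h4.
      by have [_ _ /negbTE -> _ _] := K2 _ _ hx' hy' ne.
    * have hy' : y.-1 < n by lia. have hx' : (x - n).-1 < n by lia.
      have h1 : (y == x + n) = false by apply/negbTE/eqP; lia.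
      have h2 : (x != y) by apply/eqP; lia.
      have h3 : 0 < y by lia.
      rewrite h1 h2 h3 !andbF /=.
      case: (eqVneq y.-1 (x - n).-1) => [e|ne].
        have h4 : x == y + n by apply/eqP; lia.
        by have [_ h _ _] := K1 _ hy'; rewrite -e adjC' h h4.
      have h4 : (x == y + n) = false by apply/negbTE/eqP; lia.
      rewrite h4.
      by rewrite adjC'; have [_ _ /negbTE -> _ _] := K2 _ _ hy' hx' ne.
    * rewrite !andbF /=.
      case: (eqVneq (x - n).-1 (y - n).-1) => [e|ne]; first by rewrite e adj0'.
      have hx' : (x - n).-1 < n by lia. have hy' : (y - n).-1 < n by lia.
      by have [_ _ _ _ /negbTE ->] := K2 _ _ hx' hy' ne.
Qed.
End Emb2.

Lemma fam N (W : {set 'I_N}) m (x0 : 'I_N) : m <= #|W| ->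
  exists f : nat -> 'I_N, (forall i, i < m -> f i \in W) /\
     (forall i j, i < m -> j < m -> f i = f j -> i = j).
Proof.
move=> h; exists (nth x0 (enum W)); split.
  move=> i lt; rewrite -mem_enum; apply: mem_nth; rewrite -cardE; exact: leq_trans lt h.
move=> i j hi hj e; apply/eqP.
rewrite -(nth_uniq x0 _ _ (enum_uniq (mem W))) ?e // -cardE; exact: leq_trans _ h.
Qed.

Lemma homog_sym N (e : rel 'I_N) W b : (forall x y, e x y = e y x) -> homog e W b ->
  forall x y, x \in W -> y \in W -> x != y -> e x y = b.
Proof.
move=> es h x y xW yW ne; case: (ltngtP x y) => c; first exact: h.
  rewrite es; exact: h.
by move/val_inj: c ne => ->; rewrite eqxx.
Qed.

Lemma homog_sub N (e : rel 'I_N) (W W' : {set 'I_N}) b : W' \subset W -> homog e W b -> homog e W' b.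
Proof. move=> s h x y xW yW; apply: h; exact: (subsetP s). Qed.

Definition s5 n := n.+1.
Definition s4 n := 4 ^ s5 n.
Definition s3 n := 4 ^ s4 n.
Definition s2 n := 4 ^ s3 n.
Definition s1 n := 4 ^ s2 n.

Lemma lt4 m : m < 4 ^ m. Proof. exact: ltn_expl. Qed.

Lemma s_facts n : [/\ n < s5 n, n < s4 n, n < s3 n, n < s2 n & n < s1 n].
Proof.
have h5 : n < s5 n by rewrite /s5.
have h4 : n < s4 n by apply: ltn_trans h5 (lt4 _).
have h3 : n < s3 n by apply: ltn_trans h4 (lt4 _).
have h2 : n < s2 n by apply: ltn_trans h3 (lt4 _).
have h1 : n < s1 n by apply: ltn_trans h2 (lt4 _).
by [].
Qed.

Section BFS.
Variable G : graph.
Local Notation V := ('I_(gn G)).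
Local Notation adj := (gadj G).
Variable r : V.
Local Notation K x := (connect adj r x).

Fixpoint ball k : {set V} :=
  if k is k'.+1 then ball k' :|: [set y | [exists x in ball k', adj x y]] else [set r].

Lemma ball_mono k j : k <= j -> ball k \subset ball j.
Proof.
elim: j => [|j IH]; first by rewrite leqn0 => /eqP->.
rewrite leq_eqVlt => /orP[/eqP->|lt]; first exact: subxx.
apply: subset_trans (IH lt) _; exact: subsetUl.
Qed.

Lemma ball_step k x y : x \in ball k -> adj x y -> y \in ball k.+1.
Proof. move=> xk xy /=; rewrite !inE; apply/orP; right; apply/existsP; exists x; by rewrite xk. Qed.

Lemma ball_path p x k : x \in ball k -> path adj x p -> last x p \in ball (k + size p).
Proof.
elim: p x k => [|y p IH] x k /=; first by rewrite addn0.
move=> xk /andP[xy pth]; rewrite addnS -addSn; apply: IH pth; exact: ball_step xy.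
Qed.

Lemma ball_K x k : x \in ball k -> K x.
Proof.
elim: k x => [|k IH] x /=; first by rewrite inE => /eqP->.
rewrite !inE => /orP[/IH //|/existsP[y /andP[yk yx]]].
apply: connect_trans (IH _ yk) (connect1 yx).
Qed.

Lemma K_ball x : K x -> x \in ball (gn G).
Proof.
case/connectP=> p pth ->; case: (shortenP pth) => p' pth' u _.
have r0 : r \in ball 0 by rewrite inE.
have := ball_path r0 pth'; rewrite add0n => h.
apply: (subsetP (ball_mono _)) h.
have := max_card (mem (r :: p')); rewrite card_ord (card_uniqP u) /=; lia.
Qed.

Definition dist x := find (fun k => x \in ball k) (iota 0 (gn G).+1).

Lemma dist_ball x : K x -> x \in ball (dist x).
Proof.
move=> kx; have h : has (fun k => x \in ball k) (iota 0 (gn G).+1).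
  apply/hasP; exists (gn G); [by rewrite mem_iota add0n leq0n ltnSn | exact: K_ball].
have hf : dist x < (gn G).+1.
  by rewrite /dist -{2}(size_iota 0 (gn G).+1) -has_find.
by have := nth_find 0 h; rewrite nth_iota // add0n.
Qed.

Lemma dist_le x : K x -> dist x <= gn G.
Proof.
move=> kx; have h : has (fun k => x \in ball k) (iota 0 (gn G).+1).
  apply/hasP; exists (gn G); [by rewrite mem_iota add0n leq0n ltnSn | exact: K_ball].
by move: h; rewrite has_find size_iota.
Qed.

Lemma ball_dist x k : K x -> (x \in ball k) = (dist x <= k).
Proof.
move=> kx; apply/idP/idP => h; last exact: (subsetP (ball_mono h)) _ (dist_ball kx).
rewrite leqNgt; apply/negP => lt.
have lt2 : k < (gn G).+1 by have := dist_le kx; lia.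
have := before_find 0 lt; rewrite nth_iota // add0n h //.
Qed.

Lemma K_adj x y : K x -> adj x y -> K y.
Proof. move=> kx xy; exact: connect_trans kx (connect1 xy). Qed.

Lemma dist_adj x y : K x -> adj x y -> dist y <= (dist x).+1.
Proof. move=> kx xy; rewrite -ball_dist; [exact: ball_step (dist_ball kx) xy | exact: K_adj xy]. Qed.

Lemma dist_adj2 x y : K x -> adj x y -> dist x <= (dist y).+1.
Proof. move=> kx xy; apply: dist_adj; [exact: K_adj xy | by rewrite gsym]. Qed.

Lemma dist0 x : K x -> (dist x == 0) = (x == r).
Proof. move=> kx; rewrite -leqn0 -ball_dist // inE. done. Qed.

Definition par x := odflt r [pick y | adj y x && (dist y == (dist x).-1)].

Lemma par_spec x : K x -> x != r -> [/\ adj (par x) x, dist (par x) = (dist x).-1 & K (par x)].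
Proof.
move=> kx xr.
have : dist x != 0 by rewrite dist0.
case e : (dist x) => [//|k] _.
have : x \in ball k.+1 by rewrite ball_dist // e.
rewrite /= !inE => /orP[|/existsP[y /andP[yk yx]]].
  by rewrite ball_dist // e ltnn.
have ky := ball_K yk.
have dy : dist y = k.
  apply/eqP; rewrite eqn_leq -ball_dist // yk /=; rewrite leqNgt; apply/negP => lt.
  have : x \in ball k.
    apply: (subsetP (ball_mono lt)); exact: ball_step (dist_ball ky) yx.
  by rewrite ball_dist // e ltnn.
rewrite /par; case: pickP => [y' /andP[y'x /eqP dy']|] /=.
  rewrite dy' e; split => //; apply: connect_trans kx _; apply: connect1; by rewrite gsym.
by move/(_ y); rewrite yx dy e eqxx.
Qed.

Lemma iter_par j x : K x -> j <= dist x -> K (iter j par x) /\ dist (iter j par x) = dist x - j.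
Proof.
move=> kx; elim: j => [|j IH] lt /=; first by rewrite subn0.
have [k1 d1] := IH (ltnW lt).
have nr : iter j par x != r by rewrite -(dist0 k1) d1; lia.
have [_ d2 k2] := par_spec k1 nr; split => //; rewrite d2 d1; lia.
Qed.

Lemma iter_par_adj j x : K x -> j < dist x -> adj (iter j.+1 par x) (iter j par x).
Proof.
move=> kx lt; have [k1 d1] := iter_par kx (ltnW lt).
have nr : iter j par x != r by rewrite -(dist0 k1) d1; lia.
by have [] := par_spec k1 nr.
Qed.

Definition Dv (v x : V) := (x != v) && ~~ connect (Gm v) r x.

Lemma avoid v k x : K x -> dist x = k -> (forall j, j <= k -> iter j par x != v) -> connect (Gm v) r x.
Proof.
elim: k x => [|k IH] x kx dx h.
  by move/eqP: dx; rewrite dist0 // => /eqP ->.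
have xr : x != r by rewrite -(dist0 kx) dx.
have [px dp kp] := par_spec kx xr.
have dp' : dist (par x) = k by rewrite dp dx.
have c := IH (par x) kp dp'.
apply: connect_trans (c _) _.
  move=> j lt; rewrite -iterSr; apply: h; lia.
apply: connect1; rewrite GmE px andbT; apply/andP; split.
  exact: (h 1).
exact: (h 0).
Qed.

Lemma anc x v : K x -> Dv v x -> exists2 j, 0 < j <= dist x & iter j par x = v.
Proof.
move=> kx /andP[xv nc].
case: (boolP [exists j : 'I_(dist x).+1, (0 < j) && (iter j par x == v)]).
  case/existsP=> j /andP[j0 /eqP e]; exists j => //; rewrite j0 /=; by have := ltn_ord j.
move=> nex; case/negP: nc; apply: (avoid kx erefl) => j lt.
case: j lt => [|j] lt; first done.
apply/negP => /eqP e; case/negP: nex; apply/existsP.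
have lt' : j.+1 < (dist x).+1 by [].
by exists (Ordinal lt'); apply/andP; split => //; apply/eqP; exact: e.
Qed.


Lemma F1 x v : K x -> Dv v x -> dist v < dist x.
Proof.
move=> kx dx; have [j /andP[j0 jl] e] := anc kx dx.
have [_ d] := iter_par kx jl; rewrite -e d; lia.
Qed.

Lemma F4 x v w : K x -> Dv v x -> Dv w x -> dist v = dist w -> v = w.
Proof.
move=> kx dv dw e.
have [j /andP[_ jl] ej] := anc kx dv; have [j' /andP[_ jl'] ej'] := anc kx dw.
have [_ d] := iter_par kx jl; have [_ d'] := iter_par kx jl'.
have jj : j = j' by move: e; rewrite -ej -ej' d d'; lia.
by rewrite -ej -ej' jj.
Qed.

Lemma F3 v y z : Dv v y -> adj y z -> z != v -> Dv v z.
Proof.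
move=> /andP[yv nc] yz zv; rewrite /Dv zv /=; apply/negP => c; case/negP: nc.
apply: connect_trans c (connect1 _); by rewrite GmE zv yv gsym.
Qed.

Lemma cut_a v : K v -> v != r -> cutb v -> exists a, adj v a && Dv v a.
Proof.
move=> kv vr /existsP[x /existsP[y /and4P[xv yv cxy nc]]].
have key y0 : y0 != v -> connect adj y0 v -> ~~ connect (Gm v) r y0 -> exists a, adj v a && Dv v a.
  move=> y0v c0 n0; have [a [av anv ca]] := first_hit y0v c0.
  exists a; rewrite gsym av /Dv anv /=; apply/negP => cra; case/negP: n0.
  apply: connect_trans cra _; by rewrite (Gm_sym v a y0).
case: (boolP (connect (Gm v) r y)) => cy; last first.
  apply: (key y yv _ cy); apply: (via_v (y := x)) yv _ _; first by rewrite connect_adj_sym.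
  by rewrite (Gm_sym v y x).
case: (boolP (connect (Gm v) r x)) => cx; last exact: key x xv (via_v xv cxy nc) cx.
case/negP: nc; apply: connect_trans _ cy; by rewrite (Gm_sym v x r).
Qed.

Definition aa v := odflt v [pick a | adj v a && Dv v a].

Lemma aa_spec v : K v -> v != r -> cutb v -> adj v (aa v) /\ Dv v (aa v).
Proof.
move=> kv vr cv; rewrite /aa; case: pickP => [a /andP[]//|none].
have [a h] := cut_a kv vr cv; by have := none a; rewrite h.
Qed.

Lemma far u w : K u -> K w -> dist u + 2 <= dist w -> u != w /\ ~~ adj u w.
Proof.
move=> ku kw lt; split; first by apply/eqP => e; move: lt; rewrite e; lia.
apply/negP => a; have := dist_adj ku a; lia.
Qed.

Lemma far2 u w : K u -> K w -> (dist u + 2 <= dist w) || (dist w + 2 <= dist u) -> u != w /\ ~~ adj u w.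
Proof.
move=> ku kw /orP[h|h]; first exact: far.
have [h1 h2] := far kw ku h; by rewrite eq_sym gsym.
Qed.

Lemma deep n x : K x -> 4 * n <= dist x -> induced (nP3 n) G.
Proof.
move=> kx dx.
have Kd m : m <= dist x -> K (iter m par x) /\ dist (iter m par x) = dist x - m := iter_par kx.
apply: (emb_nP3 (t := fun i s => iter (4 * i + s) par x)).
- move=> i lt.
  have h0 : 4 * i + 0 <= dist x by lia.
  have h2 : 4 * i + 2 <= dist x by lia.
  have [k0 d0] := Kd _ h0.
  have [k2 d2] := Kd _ h2.
  have h02 : dist (iter (4 * i + 2) par x) + 2 <= dist (iter (4 * i + 0) par x) by rewrite d0 d2; lia.
  have [f1 f2] := far k2 k0 h02.
  split.
  + rewrite addn1 addn0; apply: iter_par_adj => //; lia.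
  + rewrite gsym (_ : 4 * i + 2 = (4 * i + 1).+1); last lia.
    apply: iter_par_adj => //; lia.
  + by rewrite gsym.
  + by rewrite eq_sym.
- move=> i j s s' hi hj ne hs hs'.
  have h1 : 4 * i + s <= dist x by lia.
  have h2 : 4 * j + s' <= dist x by lia.
  have [k1 d1] := Kd _ h1.
  have [k2 d2] := Kd _ h2.
  apply: far2 => //; rewrite d1 d2.
  case: (ltnP i j) => h; [apply/orP; right | apply/orP; left]; lia.
Qed.

Lemma layer n k (X : {set V}) :
  (forall v, v \in X -> [/\ K v, v != r, dist v = k & cutb v]) ->
  4 ^ (s1 n) <= #|X| ->
  ~ induced (Kstar n) G -> ~ induced (nP3 n) G -> ~ induced (K1star n) G -> False.
Proof.
move=> HX cX nK nP nK1.
have [sf5 sf4 sf3 sf2 sf1] := s_facts n.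
pose a := aa.
have fa v : v \in X -> [/\ adj v (a v), Dv v (a v), K (a v) & k < dist (a v)].
  move=> vX; have [kv vr dv cv] := HX v vX; have [h1 h2] := aa_spec kv vr cv.
  have ka : K (a v) := K_adj kv h1.
  split => //; rewrite -dv; exact: F1 ka h2.
have fnD v w : v \in X -> w \in X -> v != w -> ~~ Dv v w.
  move=> vX wX ne; apply/negP => d.
  have [kv _ dv _] := HX v vX; have [kw _ dw _] := HX w wX.
  have := F1 kw d; rewrite dv dw ltnn //.
have fnD2 v w : v \in X -> w \in X -> v != w -> ~~ Dv w (a v).
  move=> vX wX ne; apply/negP => d.
  have [kv _ dv _] := HX v vX; have [kw _ dw _] := HX w wX.
  have [_ d' ka _] := fa v vX.
  have := F4 ka d' d; rewrite dv dw => /(_ erefl) e; by rewrite e eqxx in ne.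
have aneq v w : v \in X -> w \in X -> a v != w.
  move=> vX wX; have [_ _ dw _] := HX w wX; have [_ _ _ lt] := fa v vX.
  by apply/eqP => e; move: lt; rewrite e dw ltnn.
have nA1 v w : v \in X -> w \in X -> v != w -> ~~ adj (a v) w.
  move=> vX wX ne; apply/negP => ad; have [_ d _ _] := fa v vX.
  have := F3 d ad (_ : w != v); rewrite eq_sym => /(_ ne) d2.
  by have := fnD v w vX wX ne; rewrite d2.
have nA2 v w : v \in X -> w \in X -> v != w -> ~~ adj (a v) (a w) /\ a v != a w.
  move=> vX wX ne; have [_ dv _ _] := fa v vX; have [_ dw _ _] := fa w wX.
  have n2 := fnD2 v w vX wX ne.
  split; last by apply/eqP => e; move: n2; rewrite e dw.
  apply/negP => ad; have ad' : adj (a w) (a v) by rewrite gsym.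
  by have := F3 dw ad' (aneq v w vX wX); rewrite (negbTE n2).
have pz z v : K z -> dist z < k -> v \in X -> ~~ adj z (a v) /\ z != a v.
  move=> kz lt vX; have [_ _ _ lt2] := fa v vX; have [kv _ dv _] := HX v vX.
  split; last by apply/eqP => e; move: lt lt2; rewrite e; lia.
  apply/negP => ad; have [_ d _ _] := fa v vX.
  have zv : z != v by apply/eqP => e; move: lt; rewrite e dv ltnn.
  have ad' : adj (a v) z by rewrite gsym.
  have := F1 kz (F3 d ad' zv); rewrite dv; lia.
have pv v : v \in X -> [/\ adj (par v) v, dist (par v) < k, K (par v) & par v != v].
  move=> vX; have [kv vr dv _] := HX v vX; have [h1 h2 h3] := par_spec kv vr.
  have : dist v != 0 by rewrite dist0.
  rewrite dv => k0; split => //; first by rewrite h2 dv; lia.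
  by apply/eqP => e; move: h1; rewrite e adj0.
have KC (C : {set V}) : C \subset X -> n <= #|C| -> (forall x y, x \in C -> y \in C -> x != y -> adj x y) -> False.
  move=> CX nC cl; have [f [fC finj]] := fam r nC.
  have fX i : i < n -> f i \in X by move=> h; exact: (subsetP CX _ (fC i h)).
  have fne i j : i < n -> j < n -> i != j -> f i != f j.
    move=> hi hj ne; apply/eqP => e; by rewrite (finj _ _ hi hj e) eqxx in ne.
  apply: nK; apply: (emb_Kstar (c := f) (p := fun i => a (f i))).
  - move=> i hi; by have [] := fa _ (fX i hi).
  - move=> i j hi hj ne; have fn := fne i j hi hj ne.
    have [n1 n2] := nA2 _ _ (fX i hi) (fX j hj) fn.
    split => //; first exact: cl (fC i hi) (fC j hj) fn.
    rewrite gsym; apply: nA1; [exact: fX | exact: fX | by rewrite eq_sym].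
  - move=> i j hi hj ne; rewrite eq_sym; apply: aneq; exact: fX.
have K1C z (Y : {set V}) : K z -> dist z < k -> Y \subset X -> n <= #|Y| ->
    (forall x y, x \in Y -> y \in Y -> x != y -> ~~ adj x y) -> (forall v, v \in Y -> adj z v) -> False.
  move=> kz dz YX nY ind zY; have [f [fY finj]] := fam r nY.
  have fX i : i < n -> f i \in X by move=> h; exact: (subsetP YX _ (fY i h)).
  have fne i j : i < n -> j < n -> i != j -> f i != f j.
    move=> hi hj ne; apply/eqP => e; by rewrite (finj _ _ hi hj e) eqxx in ne.
  apply: nK1; apply: (emb_K1star (z := z) (c := f) (p := fun i => a (f i))).
  - move=> i hi; have [h1 h2] := pz z (f i) kz dz (fX i hi).
    split => //; [exact: zY (fY i hi) | by have [] := fa _ (fX i hi)].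
  - move=> i j hi hj ne; have fn := fne i j hi hj ne.
    have [n1 n2] := nA2 _ _ (fX i hi) (fX j hj) fn.
    split => //; first exact: ind (fY i hi) (fY j hj) fn.
    rewrite gsym; apply: nA1; [exact: fX | exact: fX | by rewrite eq_sym].
  - move=> i j hi hj ne; rewrite eq_sym; apply: aneq; exact: fX.
have [W WX [sW hW]] := ramsey (adj) cX.
case: hW => hW.
  apply: (KC W WX _ (homog_sym (@gsym G) hW)); exact: leq_trans (ltnW sf1) sW.
have ind x y : x \in W -> y \in W -> x != y -> ~~ adj x y.
  by move=> xW yW ne; rewrite (homog_sym (@gsym G) hW xW yW ne).
have WX' v : v \in W -> v \in X by move=> h; exact: (subsetP WX).
have Kc (Z : {set V}) v0 : Z \subset W -> n < #|Z| -> v0 \in Z ->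
    (forall v, v \in Z -> v != v0 -> adj (par v0) v) -> False.
  move=> ZW nZ v0Z h; have v0X : v0 \in X by apply: WX'; exact: (subsetP ZW).
  have [_ dz kz _] := pv v0 v0X.
  have ZX : Z :\ v0 \subset X.
    apply: subset_trans (subD1set Z v0) _; exact: subset_trans ZW WX.
  apply: (K1C (par v0) (Z :\ v0)) => //.
  - move: nZ; rewrite (cardsD1 v0 Z) v0Z; lia.
  - move=> x y; rewrite !in_setD1 => /andP[_ xZ] /andP[_ yZ]; apply: ind; exact: (subsetP ZW).
  - move=> v; rewrite in_setD1 => /andP[ne vZ]; exact: h.
have nonempty (Z : {set V}) : n < #|Z| -> Z != set0.
  by move=> h; apply/negP => /eqP e; move: h; rewrite e cards0.
have [W1 W1W [sW1 hW1]] := ramsey (fun x y => par x == par y) sW.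
case: hW1 => hW1.
  have [v0 v0W m0] := set_min (nonempty _ (leq_trans sf2 sW1)).
  apply: (Kc W1 v0) => // [|v vW ne]; first exact: leq_trans sf2 sW1.
  have lt : v0 < v by rewrite ltn_neqAle m0 // andbT; apply/negP => /eqP e; case/negP: ne; apply/eqP/val_inj.
  have := hW1 _ _ v0W vW lt => /eqP ->.
  by have [] := pv v (WX' _ (subsetP W1W _ vW)).
have [W2 W2W1 [sW2 hW2]] := ramsey (fun x y => adj (par x) y) sW1.
have W2W : W2 \subset W by exact: subset_trans W2W1 W1W.
case: hW2 => hW2.
  have [v0 v0W m0] := set_min (nonempty _ (leq_trans sf3 sW2)).
  apply: (Kc W2 v0) => // [|v vW ne]; first exact: leq_trans sf3 sW2.
  have lt : v0 < v by rewrite ltn_neqAle m0 // andbT; apply/negP => /eqP e; case/negP: ne; apply/eqP/val_inj.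
  exact: hW2 _ _ v0W vW lt.
have [W3 W3W2 [sW3 hW3]] := ramsey (fun x y => adj (par y) x) sW2.
have W3W : W3 \subset W by exact: subset_trans W3W2 W2W.
case: hW3 => hW3.
  have [v0 v0W m0] := set_max (nonempty _ (leq_trans sf4 sW3)).
  apply: (Kc W3 v0) => // [|v vW ne]; first exact: leq_trans sf4 sW3.
  have lt : v < v0 by rewrite ltn_neqAle m0 // andbT; apply/negP => /eqP e; case/negP: ne; apply/eqP/val_inj.
  exact: hW3 _ _ vW v0W lt.
have [W4 W4W3 [sW4 hW4]] := ramsey (fun x y => adj (par x) (par y)) sW3.
have W4W2 : W4 \subset W2 by exact: subset_trans W4W3 W3W2.
have W4W1 : W4 \subset W1 by exact: subset_trans W4W2 W2W1.
have W4W : W4 \subset W by exact: subset_trans W4W3 W3W.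
have W4X v : v \in W4 -> v \in X by move=> h; apply: WX'; exact: (subsetP W4W).
have parinj x y : x \in W4 -> y \in W4 -> x != y -> par x != par y.
  move=> xW yW ne; apply/negbT.
  exact: (homog_sym (fun a b => eq_sym (par a) (par b)) hW1 (subsetP W4W1 _ xW) (subsetP W4W1 _ yW) ne).
have npv x y : x \in W4 -> y \in W4 -> x != y -> ~~ adj (par x) y.
  move=> xW yW ne; apply/negbT; case: (ltngtP x y) => c.
  - exact: hW2 (subsetP W4W2 _ xW) (subsetP W4W2 _ yW) c.
  - exact: hW3 (subsetP W4W3 _ yW) (subsetP W4W3 _ xW) c.
  - by move/val_inj: c ne => ->; rewrite eqxx.
have parne x y : x \in W4 -> y \in W4 -> par x != y.
  move=> xW yW; have [_ d _ _] := pv x (W4X _ xW); have [_ _ dy _] := HX y (W4X _ yW).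
  by apply/eqP => e; move: d; rewrite e dy ltnn.
have [f [fW finj]] := fam r sW4.
have fX i : i < n.+1 -> f i \in X by move=> h; exact: W4X (fW i h).
have fne i j : i < n.+1 -> j < n.+1 -> i != j -> f i != f j.
  move=> hi hj ne; apply/eqP => e; by rewrite (finj _ _ hi hj e) eqxx in ne.
have fI i : i < n -> f i \in W4 by move=> h; apply: fW; exact: ltnW h.
have fne' i j : i < n -> j < n -> i != j -> f i != f j.
  move=> hi hj ne; exact: fne i j (ltnW hi) (ltnW hj) ne.
have fX' i : i < n -> f i \in X by move=> h; exact: fX i (ltnW h).
have fWW i : i < n -> f i \in W by move=> h; exact: (subsetP W4W _ (fI i h)).
case: hW4 => hW4.
  apply: nK; apply: (emb_Kstar (c := fun i => par (f i)) (p := f)).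
  - move=> i hi; by have [] := pv _ (fX' i hi).
  - move=> i j hi hj ne; have fn := fne' i j hi hj ne.
    split.
    + exact: parinj (fI i hi) (fI j hj) fn.
    + exact: (homog_sym (fun a b => gsym (par a) (par b)) hW4 (fI i hi) (fI j hj) fn).
    + exact: npv (fI i hi) (fI j hj) fn.
    + exact: fn.
    + exact: ind (fWW i hi) (fWW j hj) fn.
  - move=> i j hi hj ne; exact: parne (fI i hi) (fI j hj).
apply: nP; apply: (emb_nP3 (t := fun i s => if s == 0 then par (f i) else if s == 1 then f i else a (f i))).
- move=> i hi /=; have [h1 _ kp _] := pv _ (fX' i hi); have [h3 _ _ _] := fa _ (fX' i hi).
  have [_ d _ _] := pv _ (fX' i hi).
  have [h4 h5] := pz _ _ kp d (fX' i hi).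
  by split => //; rewrite gsym.
- move=> i j s s' hi hj ne hs hs'; have fn := fne' i j hi hj ne.
  have xi := fX' i hi; have xj := fX' j hj; have wi := fI i hi; have wj := fI j hj.
  have [_ di ki _] := pv _ xi; have [_ dj kj _] := pv _ xj.
  case: s hs => [|[|[|s]]] // _; case: s' hs' => [|[|[|s']]] // _ /=.
  + split; first exact: parinj.
    exact: (negbT (homog_sym (fun a b => gsym (par a) (par b)) hW4 wi wj fn)).
  + by split; [exact: parne | exact: npv].
  + have [h1 h2] := pz _ _ ki di xj; by split.
  + split; first by rewrite eq_sym; exact: parne.
    by rewrite gsym; apply: npv => //; rewrite eq_sym.
  + by split; [exact: fn | exact: ind (fWW i hi) (fWW j hj) fn].
  + split; first by rewrite eq_sym; exact: aneq.
    by rewrite gsym; apply: nA1 => //; rewrite eq_sym.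
  + have [h1 h2] := pz _ _ kj dj xi; split; [by rewrite eq_sym | by rewrite gsym].
  + by split; [exact: aneq | exact: nA1].
  + have [h1 h2] := nA2 _ _ xi xj fn; by split.
Qed.

End BFS.

Lemma induced_trans A B C : induced A B -> induced B C -> induced A C.
Proof.
case=> f [fi fa] [g [gi ga]]; exists (g \o f); split; first exact: inj_comp.
move=> x y /=; by rewrite ga fa.
Qed.

Definition mL n := 4 ^ s1 n + 4 * n + 2.
Definition mC n := 4 ^ mL n + n + 1.

Section Main.
Variable G : graph.
Local Notation V := ('I_(gn G)).
Local Notation adj := (gadj G).

Lemma sep x y u w : connect adj x u -> connect adj y w -> ~~ connect adj x y -> u != w /\ ~~ adj u w.
Proof.
move=> cu cw nc; have cw' : connect adj w y by rewrite connect_adj_sym.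
split.
  apply/eqP => e; case/negP: nc; apply: connect_trans cu _; rewrite e; exact: cw'.
apply/negP => a; case/negP: nc; apply: connect_trans cu _; exact: connect_trans (connect1 a) cw'.
Qed.

Lemma P3_cut v : cutb v -> exists b a, [/\ adj v b, adj v a, ~~ adj b a & b != a].
Proof.
case/existsP=> x /existsP[y /and4P[xv yv cxy nc]].
have cxv := via_v xv cxy nc.
have cyv : connect adj y v.
  apply: (via_v (y := x)) yv _ _; first by rewrite connect_adj_sym.
  by rewrite (Gm_sym v y x).
have [b [bv bnv cb]] := first_hit xv cxv.
have [a [av anv ca]] := first_hit yv cyv.
have ca' : connect (Gm v) a y by rewrite (Gm_sym v a y).
exists b, a; split; try by rewrite gsym.
- apply/negP => ba; case/negP: nc; apply: connect_trans cb _.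
  have e : Gm v b a by rewrite GmE bnv anv.
  exact: connect_trans (connect1 e) ca'.
- apply/eqP => e; case/negP: nc; apply: connect_trans cb _; rewrite e; exact: ca'.
Qed.

Definition P3f (v : V) := odflt (v, v)
  [pick ba : V * V | [&& adj v ba.1, adj v ba.2, ~~ adj ba.1 ba.2 & ba.1 != ba.2]].

Lemma P3f_spec v : cutb v ->
  [&& adj v (P3f v).1, adj v (P3f v).2, ~~ adj (P3f v).1 (P3f v).2 & (P3f v).1 != (P3f v).2].
Proof.
move=> cv; rewrite /P3f; case: pickP => [ba //|none].
have [b [a [h1 h2 h3 h4]]] := P3_cut cv.
by have := none (b, a); rewrite /= h1 h2 h3 h4.
Qed.

Lemma deep_or r n (Y : {set V}) : (forall v, v \in Y -> connect adj r v) ->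
  (forall x y, x \in Y -> y \in Y -> x != y -> dist r x != dist r y) -> 4 * n + 2 <= #|Y| ->
  exists2 v, v \in Y & 4 * n <= dist r v.
Proof.
move=> KY hd cY.
case: (boolP [exists v in Y, 4 * n <= dist r v]) => [/exists_inP[v vY h]|none]; first by exists v.
have lt v : v \in Y -> dist r v < 4 * n.
  move=> vY; rewrite ltnNge; apply/negP => h; case/negP: none; apply/exists_inP; by exists v.
pose g (v : V) : 'I_(4 * n).+1 := inord (dist r v).
have inj : {in Y &, injective g}.
  move=> x y xY yY e; case: (eqVneq x y) => // ne; have := hd x y xY yY ne.
  move/(congr1 (@nat_of_ord _)): e; rewrite /g !inordK; first by move=> ->; rewrite eqxx.
  - by have := lt y yY; lia.
  - by have := lt x xY; lia.
have h1 := card_in_imset inj.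
have h2 : #|g @: Y| <= #|'I_(4 * n).+1| := max_card _.
rewrite card_ord in h2.
have h3 : #|Y| <= (4 * n).+1 by rewrite -h1.
lia.
Qed.

Lemma main n : 0 < n -> ~ induced (Kstar n) G -> ~ induced (nP3 n) G -> ~ induced (K1star n) G ->
  #|[set v : V | cutb v]| < 4 ^ mC n.
Proof.
move=> n0 nK nP nK1; rewrite ltnNge; apply/negP => cC.
have [W WC [sW hW]] := ramsey (connect adj) cC.
have Wcut v : v \in W -> cutb v by move=> h; move/subsetP: WC => /(_ v h); rewrite inE.
have mCn : n <= mC n by rewrite /mC; lia.
have W0 : W != set0.
  apply/negP => /eqP e; move: sW; rewrite e cards0 /mC; lia.
case: hW => hW; last first.
  have nW : n <= #|W| by exact: leq_trans mCn sW.
  case/set0Pn: W0 => x0 _.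
  have [f [fW finj]] := fam x0 nW.
  pose t i s := if s == 0 then (P3f (f i)).1 else if s == 1 then f i else (P3f (f i)).2.
  have ct i s : i < n -> connect adj (f i) (t i s).
    move=> hi; have /and4P[h1 h2 _ _] := P3f_spec (Wcut _ (fW i hi)).
    rewrite /t; case: (s == 0); first exact: connect1 h1.
    case: (s == 1); [exact: connect0 | exact: connect1 h2].
  apply: nP; apply: (emb_nP3 (t := t)).
  - move=> i hi; have /and4P[h1 h2 h3 h4] := P3f_spec (Wcut _ (fW i hi)); by split.
  - move=> i j s s' hi hj ne hs hs'.
    have fn : f i != f j by apply/eqP => e; move: ne; rewrite (finj _ _ hi hj e) eqxx.
    have nc : ~~ connect adj (f i) (f j).
      exact: negbT (homog_sym (@connect_adj_sym G) hW (fW i hi) (fW j hj) fn).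
    exact: sep (ct i s hi) (ct j s' hj) nc.
have [r rW rm] := set_min W0.
have Xc : 4 ^ mL n <= #|W :\ r| by move: sW; rewrite (cardsD1 r W) rW /mC; lia.
have XK v : v \in W :\ r -> connect adj r v /\ v != r.
  rewrite in_setD1 => /andP[ne vW]; split => //.
  have lt : r < v by rewrite ltn_neqAle rm // andbT; apply/negP => /eqP e; case/negP: ne; apply/eqP/val_inj.
  exact: hW _ _ rW vW lt.
have [Y YX [sY hY]] := ramsey (fun x y => dist r x == dist r y) Xc.
have YK v : v \in Y -> connect adj r v /\ v != r by move=> h; apply: XK; exact: (subsetP YX).
case: hY => hY; last first.
  have hd x y : x \in Y -> y \in Y -> x != y -> dist r x != dist r y.
    move=> xY yY ne; exact: negbT (homog_sym (fun a b => eq_sym (dist r a) (dist r b)) hY xY yY ne).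
  have cY : 4 * n + 2 <= #|Y| by move: sY; rewrite /mL; lia.
  have [v vY dv] := deep_or (fun v h => (YK v h).1) hd cY.
  apply: nP; exact: deep (YK v vY).1 dv.
have Y0 : Y != set0 by apply/negP => /eqP e; move: sY; rewrite e cards0 /mL; lia.
have [v1 v1Y _] := set_min Y0.
apply: (layer (r := r) (n := n) (k := dist r v1) (X := Y)) => //.
  move=> v vY; have [kv vr] := YK v vY; split => //.
  - case: (eqVneq v v1) => [->//|ne]; apply/eqP.
    exact: (homog_sym (fun a b => eq_sym (dist r a) (dist r b)) hY vY v1Y ne).
  - apply: Wcut; have := subsetP YX _ vY; rewrite in_setD1 => /andP[_ h]; exact: h.
by move: sY; rewrite /mL; lia.
Qed.

Lemma pendant_cut v x y : adj v x -> (forall z, adj x z -> z = v) -> adj v y -> y != x -> cutb v.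
Proof.
move=> vx px vy yx; apply/existsP; exists x; apply/existsP; exists y.
have xv : x != v by apply: contraTneq vx => ->; rewrite adj0.
have yv : y != v by apply: contraTneq vy => ->; rewrite adj0.
rewrite xv yv /=; apply/andP; split.
  have xv' : adj x v by rewrite gsym.
  exact: connect_trans (connect1 xv') (connect1 vy).
apply/negP => /connectP[[|z p] /= pth e]; first by rewrite e eqxx in yx.
case/andP: pth; rewrite GmE => /and3P[_ zv /px ze] _; by rewrite ze eqxx in zv.
Qed.

Lemma count_cuts m (h : 'I_m -> V) : injective h -> (forall i, cutb (h i)) -> m <= #|[set v : V | cutb v]|.
Proof.
move=> hi hc; have := card_imset (mem [set: 'I_m]) hi; rewrite cardsT card_ord => <-.
apply: subset_leq_card; apply/subsetP => v /imsetP[i _ ->]; by rewrite inE.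
Qed.

End Main.

Lemma KstarE n (x y : 'I_(gn (Kstar n))) : gadj (Kstar n) x y =
  (val x != val y) && (((x < n) && (y < n) || (x < n) && (val y == x + n)) ||
                       ((y < n) && (x < n) || (y < n) && (val x == y + n))).
Proof. by []. Qed.

Lemma nP3E n (x y : 'I_(gn (nP3 n))) : gadj (nP3 n) x y =
  (val x != val y) && ((x %/ 3 == y %/ 3) && (x %% 3 == 1) && (y %% 3 != 1) ||
                       (y %/ 3 == x %/ 3) && (y %% 3 == 1) && (x %% 3 != 1)).
Proof. by []. Qed.

Lemma K1starE n (x y : 'I_(gn (K1star n))) : gadj (K1star n) x y =
  (val x != val y) && (((val x == 0) && (0 < y <= n) || (0 < x <= n) && (val y == x + n)) ||
                       ((val y == 0) && (0 < x <= n) || (0 < y <= n) && (val x == y + n))).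
Proof. by []. Qed.

Lemma cuts_Kstar n : 1 < n -> n <= #|[set v : 'I_(gn (Kstar n)) | cutb v]|.
Proof.
move=> n1.
have hv (i : 'I_n) : i < gn (Kstar n) by rewrite /=; have := ltn_ord i; lia.
apply: (count_cuts (h := fun i => Ordinal (hv i))).
  by move=> i j /(congr1 val) /= e; apply: val_inj.
move=> i; have li := ltn_ord i.
have hx : i + n < gn (Kstar n) by rewrite /=; lia.
have hy : (val i == 0 :> nat) < gn (Kstar n) by rewrite /=; lia.
apply: (pendant_cut (x := Ordinal hx) (y := Ordinal hy)).
- rewrite KstarE /=; lia.
- move=> z; rewrite KstarE /= => h; apply: ord_inj => /=; lia.
- rewrite KstarE /=; lia.
- apply/eqP => /(congr1 val) /=; lia.
Qed.

Lemma cuts_nP3 n : n <= #|[set v : 'I_(gn (nP3 n)) | cutb v]|.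
Proof.
have hv (i : 'I_n) : 3 * i + 1 < gn (nP3 n) by rewrite /=; have := ltn_ord i; lia.
apply: (count_cuts (h := fun i => Ordinal (hv i))).
  move=> i j /(congr1 val) /= e; apply: ord_inj; lia.
move=> i; have li := ltn_ord i.
have hx : 3 * i < gn (nP3 n) by rewrite /=; lia.
have hy : 3 * i + 2 < gn (nP3 n) by rewrite /=; lia.
apply: (pendant_cut (x := Ordinal hx) (y := Ordinal hy)).
- rewrite nP3E /=; lia.
- move=> z; rewrite nP3E /= => h; apply: ord_inj => /=; lia.
- rewrite nP3E /=; lia.
- apply/eqP => /(congr1 val) /=; lia.
Qed.

Lemma cuts_K1star n : 1 < n -> n <= #|[set v : 'I_(gn (K1star n)) | cutb v]|.
Proof.
move=> n1.
have hv (i : 'I_n) : i.+1 < gn (K1star n) by rewrite /=; have := ltn_ord i; lia.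
apply: (count_cuts (h := fun i => Ordinal (hv i))).
  by move=> i j /(congr1 val) /= [e]; apply: val_inj.
move=> i; have li := ltn_ord i.
have hx : i.+1 + n < gn (K1star n) by rewrite /=; lia.
have hy : 0 < gn (K1star n) by rewrite /=; lia.
apply: (pendant_cut (x := Ordinal hx) (y := Ordinal hy)).
- rewrite K1starE /=; lia.
- move=> z; rewrite K1starE /= => h; apply: ord_inj => /=; lia.
- rewrite K1starE /=; lia.
- apply/eqP => /(congr1 val) /=; lia.
Qed.

Unset Implicit Arguments.
Theorem corollary1p11 (F : gfamily) :
  (exists c : nat, forall G : graph, Hfree F G ->
      #|[set v : 'I_(gn G) | (2%:Z <= @sdeg G v)%R]| < c)
  <->
  (exists n : nat, 0 < n /\ fam_le F (three_fam n)).
Proof.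
have setE (G : graph) : [set v : 'I_(gn G) | (2%:Z <= @sdeg G v)%R] = [set v | cutb v].
  by apply/setP => v; rewrite !inE sdeg_cut.
split.
- case=> c hc; exists c.+2; split => //.
  move=> H2 hH2.
  have big : c <= #|[set v : 'I_(gn H2) | cutb v]|.
    case: hH2 => [->|[->|->]].
    + have h := @cuts_Kstar c.+2 erefl; exact: leq_trans (leqW (leqnSn c)) h.
    + have h := @cuts_nP3 c.+2; exact: leq_trans (leqW (leqnSn c)) h.
    + have h := @cuts_K1star c.+2 erefl; exact: leq_trans (leqW (leqnSn c)) h.
  apply: NNPP => nex; have hf : Hfree F H2.
    move=> H fH iH; apply: nex; by exists H.
  by have := hc _ hf; rewrite setE ltnNge big.
- case=> n [n0 hle]; exists (4 ^ mC n) => G hf; rewrite setE.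
  apply: main => // hi.
  + have [H1 fH1 iH1] := hle (Kstar n) (or_introl erefl); exact: hf H1 fH1 (induced_trans iH1 hi).
  + have [H1 fH1 iH1] := hle (nP3 n) (or_intror (or_introl erefl)); exact: hf H1 fH1 (induced_trans iH1 hi).
  + have [H1 fH1 iH1] := hle (K1star n) (or_intror (or_intror erefl)); exact: hf H1 fH1 (induced_trans iH1 hi).
Qed.
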